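(* Let $\mathfrak g$ be a basic simple Lie superalgebra with an $\mathfrak{sl}_2$-triple $\{e,x,f\}$ giving a minimal grading $\mathfrak g=\mathbb Cf\oplus\mathfrak g_{-1/2}\oplus\mathfrak g_0\oplus\mathfrak g_{1/2}\oplus\mathbb Ce$, and suppose the $\mathfrak g_0$-module $\mathfrak g_{1/2}$ is irreducible. If $\phi,\phi'$ are almost compact involutions of $\mathfrak g$ with $\phi|_{\mathfrak g_0}=\phi'|_{\mathfrak g_0}$, then either $\phi'=\phi$ or $\phi'(a)=(-1)^{2j}\phi(a)$ for all $a\in\mathfrak g_j$, $j\in\{0,\pm\frac12,\pm1\}$. (That is, an almost compact involution is determined up to a sign by its action on $\mathfrak g_0$.)
   Context: $\mathfrak g_j$ denotes the $j$-eigenspace of $\mathrm{ad}\,x$; $[x,e]=e$, $[x,f]=-f$, $[e,f]=x$; $\mathfrak g_{\pm1/2}$ odd, $\mathfrak g_0$ even. $\mathfrak g^\natural$ is the centralizer of $\{e,x,f\}$ in $\mathfrak g_{\bar0}$. An almost compact involution is a conjugate-linear involutive automorphism of $\mathfrak g$ fixing $e,x,f$ whose restriction to $\mathfrak g^\natural$ is compact. *)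

(* Defs.v *)
(* Lie superalgebras are finite-dimensional vector spaces
   (vectType C) with a Z/2-grading given by two subspaces and a bracket. *)
From HB Require Import structures.
From mathcomp Require Import all_boot all_order all_algebra.
From mathcomp Require Import complex.
From mathcomp Require Import reals.
Set Implicit Arguments. Unset Strict Implicit. Unset Printing Implicit Defensive.
Import Order.TTheory GRing.Theory Num.Theory.
Local Open Scope ring_scope.

Section LieSuper.
Variable R : realType.
Local Notation C := R[i].
Variable V : vectType C.
Variables (ev od : {vspace V}) (br : V -> V -> V).

Definition homog (p : bool) (u : V) : Prop :=
  u \in (if p then od else ev).

Definition ssign (p q : bool) : C := (-1) ^+ (p && q).

Definition is_lie_superalgebra : Prop :=
  [/\ (ev + od)%VS = fullv /\ (ev :&: od)%VS = 0%VS,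
      (forall (a : C) u v w, br (a *: u + v) w = a *: br u w + br v w)
      /\ (forall (a : C) u v w, br u (a *: v + w) = a *: br u v + br u w),
      (forall p q u v, homog p u -> homog q v -> homog (addb p q) (br u v)),
      (forall p q u v, homog p u -> homog q v -> br u v = - (ssign p q *: br v u))
    & (forall p q u v w, homog p u -> homog q v ->
         br u (br v w) = br (br u v) w + ssign p q *: br v (br u w))].

Definition graded_ideal (I : {vspace V}) : Prop :=
  (I = (I :&: ev) + (I :&: od))%VS /\ (forall u v, v \in I -> br u v \in I).

Definition simple_lsa : Prop :=
  is_lie_superalgebra /\ (exists u v, br u v != 0) /\
  (forall I, graded_ideal I -> I = 0%VS \/ I = fullv).

(* the even part, a Lie algebra, is reductive: its adjoint representation is
   completely reducible (every ad-invariant subspace has an ad-invariant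
   complement). *)
Definition ad_inv_even (W : {vspace V}) : Prop :=
  (W <= ev)%VS /\ (forall u w, u \in ev -> w \in W -> br u w \in W).
Definition even_part_reductive : Prop :=
  forall W, ad_inv_even W ->
    exists W', ad_inv_even W' /\ (W :&: W' = 0)%VS /\ (W + W' = ev)%VS.

(* nondegenerate even supersymmetric invariant bilinear form *)
Definition good_form (B : V -> V -> C) : Prop :=
  [/\ (forall (a : C) u v w, B (a *: u + v) w = a * B u w + B v w),
      (forall (a : C) u v w, B u (a *: v + w) = a * B u v + B u w),
      (forall u v, u \in ev -> v \in od -> B u v = 0)
      /\ (forall p q u v, homog p u -> homog q v -> B u v = ssign p q * B v u),
      (forall u v w, B (br u v) w = B u (br v w))
    & (forall u, (forall v, B u v = 0) -> u = 0)].

Definition basic_simple : Prop :=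
  [/\ simple_lsa, even_part_reductive & exists B, good_form B].

Definition in_gr (x : V) (j : C) (a : V) : Prop := br x a = j *: a.

Definition minimal_sl2 (e x f : V) : Prop :=
  [/\ [/\ e \in ev, x \in ev & f \in ev],
      [/\ br x e = e, br x f = - f & br e f = x],
      (forall a, exists am1 amh a0 ah a1,
          [/\ in_gr x (-1) am1 /\ in_gr x (- 2^-1) amh, in_gr x 0 a0,
              in_gr x (2^-1) ah, in_gr x 1 a1
            & a = am1 + amh + a0 + ah + a1]),
      (forall a, in_gr x 1 a -> exists c : C, a = c *: e)
      /\ (forall a, in_gr x (-1) a -> exists c : C, a = c *: f)
    & (forall a, in_gr x (2^-1) a \/ in_gr x (- 2^-1) a -> a \in od)
      /\ (forall a, in_gr x 0 a -> a \in ev)].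

Definition half_irreducible (x : V) : Prop :=
  (exists a, in_gr x (2^-1) a /\ a != 0) /\
  forall W : {vspace V},
    (forall a, a \in W -> in_gr x (2^-1) a) ->
    (forall c a, in_gr x 0 c -> a \in W -> br c a \in W) ->
    W = 0%VS \/ (forall a, in_gr x (2^-1) a -> a \in W).

Definition in_gnat (e x f a : V) : Prop :=
  [/\ a \in ev, br e a = 0, br x a = 0 & br f a = 0].

Definition conj_lin_inv_aut (phi : V -> V) : Prop :=
  [/\ (forall (a : C) u v, phi (a *: u + v) = conjc a *: phi u + phi v),
      (forall u, phi (phi u) = u),
      (forall u v, phi (br u v) = br (phi u) (phi v)),
      (forall u, u \in ev -> phi u \in ev)
    & (forall u, u \in od -> phi u \in od)].

(* phi restricted to g^natural is compact: the real Lie algebra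
   k = {a in g^natural | phi a = a} (the real form defined by phi) is compact,
   i.e. carries a positive definite ad(k)-invariant real inner product. *)
Definition compact_on_gnat (e x f : V) (phi : V -> V) : Prop :=
  let K a := in_gnat e x f a /\ phi a = a in
  exists ip : V -> V -> R,
    [/\ (forall (r : R) a b c, K a -> K b -> K c ->
           ip ((r%:C)%C *: a + b) c = r * ip a c + ip b c),
        (forall a b, K a -> K b -> ip a b = ip b a),
        (forall a, K a -> a != 0 -> 0 < ip a a)
      & (forall a b c, K a -> K b -> K c ->
           ip (br c a) b + ip a (br c b) = 0)].

Definition almost_compact (e x f : V) (phi : V -> V) : Prop :=
  [/\ conj_lin_inv_aut phi, phi e = e, phi x = x, phi f = f
    & compact_on_gnat e x f phi].

End LieSuper.

(* Main.v *)
Require Import Defs.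
From HB Require Import structures.
From mathcomp Require Import all_boot all_order all_algebra all_field.
From mathcomp Require Import complex reals ring.
From Stdlib Require Import Classical.
From mathcomp Require Import zify.
Set Implicit Arguments. Unset Strict Implicit. Unset Printing Implicit Defensive.
Import Order.TTheory GRing.Theory Num.Theory.
Local Open Scope ring_scope.
Import passmx.

Lemma kerspace_sub (F : fieldType) (V : vectType F) (h : V -> V)
  (hlin : forall a u v, h (a *: u + v) = a *: h u + h v) (l : F) :
  exists K : {vspace V}, forall a, (a \in K) = (h a == l *: a).
Proof.
pose g a := h a - l *: a.
have glin : linear g.
  move=> a u v; rewrite /g hlin scalerDr !scalerBr !scalerA mulrC.
  by rewrite opprD addrACA.
pose gl : {linear V -> V} := HB.pack g (GRing.isLinear.Build _ _ _ _ g glin).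
exists (lker (linfun gl)) => a.
by rewrite memv_ker lfunE /= /g subr_eq0.
Qed.

Lemma exists_eigvec (F : closedFieldType) (V : vectType F) (U : {vspace V})
  (g0 : V -> V) (glin : linear g0) : U != 0%VS -> (forall u, u \in U -> g0 u \in U) ->
  exists l v, [/\ v \in U, v != 0 & g0 v = l *: v].
Proof.
move=> U0 gU0.
pose gl : {linear V -> V} := HB.pack g0 (GRing.isLinear.Build _ _ _ _ g0 glin).
pose g : 'End(V) := linfun gl.
have gE u : g u = g0 u by rewrite lfunE.
have gU u : u \in U -> g u \in U by rewrite gE; apply: gU0.
pose h : 'End(subvs_of U) := (linfun (vsproj U) \o g \o linfun vsval)%VF.
pose e := vbasis {: subvs_of U}.
have eb : basis_of {: subvs_of U} e := vbasisP _.
pose M := mxof e e h.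
have : size (char_poly M) != 1%N.
  rewrite size_char_poly; apply/eqP=> /eq_add_S d0.
  move: U0; rewrite -dimv_eq0; suff -> : \dim U = \dim {: subvs_of U} by rewrite d0.
  by rewrite dimvf.

move/closed_rootP=> [l]; rewrite -eigenvalue_root_char /eigenvalue => nz.
have : leigenspace h l != 0%VS by rewrite (leigenspaceE eb) vsof_eq0.
rewrite -vpick0 => nzw.
have := memv_pick (leigenspace h l); set w := vpick _ => wl.
move: wl; rewrite memv_ker !lfunE /= !lfunE /= subr_eq0 => /eqP; rewrite !lfunE /= lfunE /= => hw.
exists l, (vsval w); split; first exact: subvsP.
  by apply: contra nzw => /eqP w0; apply/eqP/val_inj; rewrite /= w0.
rewrite -gE -[g _](vsprojK (gU _ (subvsP w))).
by move: hw; rewrite !lfunE /= => ->; rewrite linearZ.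
Qed.

Section Pf.
Variable R : realType.
Local Notation C := R[i].
Variables (V : vectType C) (ev od : {vspace V}) (br : V -> V -> V) (e x f : V)
  (phi phi' : V -> V).
Hypotheses (Hb : basic_simple ev od br) (Hm : minimal_sl2 ev od br e x f)
  (Hh : half_irreducible br x) (Hp : almost_compact ev od br e x f phi)
  (Hp' : almost_compact ev od br e x f phi')
  (H0 : forall a, in_gr br x 0 a -> phi' a = phi a).

Local Notation gr := (in_gr br x).

Lemma lsa : is_lie_superalgebra ev od br.
Proof. by case: Hb => [[]]. Qed.

Lemma brL a u v w : br (a *: u + v) w = a *: br u w + br v w.
Proof. by case: lsa => _ [] . Qed.
Lemma brR a u v w : br u (a *: v + w) = a *: br u v + br u w.
Proof. by case: lsa => _ [] . Qed.

Lemma br0r u : br u 0 = 0.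
Proof.
have h := brR 1 u 0 0; rewrite !scale1r addr0 in h.
by apply: (addrI (br u 0)); rewrite addr0 -h.
Qed.
Lemma br0l u : br 0 u = 0.
Proof.
have h := brL 1 0 0 u; rewrite !scale1r addr0 in h.
by apply: (addrI (br 0 u)); rewrite addr0 -h.
Qed.
Lemma brZr a u v : br u (a *: v) = a *: br u v.
Proof. by have := brR a u v 0; rewrite addr0 br0r addr0. Qed.
Lemma brZl a u v : br (a *: u) v = a *: br u v.
Proof. by have := brL a u 0 v; rewrite addr0 br0l addr0. Qed.
Lemma brDr u v w : br u (v + w) = br u v + br u w.
Proof. by have := brR 1 u v w; rewrite !scale1r. Qed.
Lemma brNl u v : br (- u) v = - br u v.
Proof. by rewrite -scaleN1r brZl scaleN1r. Qed.

Lemma jacx q c w : homog ev od q c ->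
  br x (br c w) = br (br x c) w + br c (br x w).
Proof.
move=> hc; case: lsa => _ _ _ _ jac.
have hx : homog ev od false x by case: Hm => [[]].
by rewrite (jac false q) // /ssign /= expr0 scale1r.
Qed.

Lemma jacx' u v w : homog ev od false u -> homog ev od false v ->
  br u (br v w) = br (br u v) w + br v (br u w).
Proof.
move=> hu hv; case: lsa => _ _ _ _ jac.
by rewrite (jac false false) // /ssign /= expr0 scale1r.
Qed.

Lemma gr_br j k q c w : homog ev od q c -> gr j c -> gr k w -> gr (j + k) (br c w).
Proof.
move=> hc; rewrite /in_gr => hj hk.
by rewrite (jacx _ hc) hj hk brZl brZr scalerDl.
Qed.

Lemma ev_gr0 a : gr 0 a -> homog ev od false a.
Proof. by case: Hm => _ _ _ _ [_]; apply. Qed.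
Lemma od_half a : gr (2^-1) a \/ gr (- 2^-1) a -> homog ev od true a.
Proof. by case: Hm => _ _ _ _ [h _]; apply: h. Qed.
Lemma hx : homog ev od false x. Proof. by case: Hm => [[]]. Qed.
Lemma he : homog ev od false e. Proof. by case: Hm => [[]]. Qed.
Lemma hf : homog ev od false f. Proof. by case: Hm => [[]]. Qed.
Lemma gre : gr 1 e. Proof. by case: Hm => _ [h _ _]; rewrite /in_gr h scale1r. Qed.
Lemma grf : gr (-1) f. Proof. by case: Hm => _ [_ h _]; rewrite /in_gr h scaleN1r. Qed.

Lemma phiL a u v : phi (a *: u + v) = conjc a *: phi u + phi v.
Proof. by case: Hp => [[]]. Qed.
Lemma phi'L a u v : phi' (a *: u + v) = conjc a *: phi' u + phi' v.
Proof. by case: Hp' => [[]]. Qed.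
Lemma phiK u : phi (phi u) = u. Proof. by case: Hp => [[]]. Qed.
Lemma phi_br u v : phi (br u v) = br (phi u) (phi v). Proof. by case: Hp => [[]]. Qed.
Lemma phi'_br u v : phi' (br u v) = br (phi' u) (phi' v). Proof. by case: Hp' => [[]]. Qed.

Lemma phi0 : phi 0 = 0.
Proof.
have h := phiL 1 0 0; rewrite !scale1r addr0 conjc1 scale1r in h.
by apply: (addrI (phi 0)); rewrite addr0 -h.
Qed.
Lemma phi'0 : phi' 0 = 0.
Proof.
have h := phi'L 1 0 0; rewrite !scale1r addr0 conjc1 scale1r in h.
by apply: (addrI (phi' 0)); rewrite addr0 -h.
Qed.
Lemma phiZ a u : phi (a *: u) = conjc a *: phi u.
Proof. by have := phiL a u 0; rewrite addr0 phi0 addr0. Qed.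
Lemma phi'Z a u : phi' (a *: u) = conjc a *: phi' u.
Proof. by have := phi'L a u 0; rewrite addr0 phi'0 addr0. Qed.
Lemma phi'D u v : phi' (u + v) = phi' u + phi' v.
Proof. by have := phi'L 1 u v; rewrite conjc1 !scale1r. Qed.

Definition psi a := phi (phi' a).
Lemma psiL a u v : psi (a *: u + v) = a *: psi u + psi v.
Proof. by rewrite /psi phi'L phiL conjcK. Qed.
Lemma psiZ a u : psi (a *: u) = a *: psi u.
Proof. by have := psiL a u 0; rewrite addr0 /psi phi'0 phi0 addr0. Qed.
Lemma psi_br u v : psi (br u v) = br (psi u) (psi v).
Proof. by rewrite /psi phi'_br phi_br. Qed.
Lemma psix : psi x = x. Proof. by case: Hp => _ _ h _ _; case: Hp' => _ _ h' _ _; rewrite /psi h' h. Qed.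
Lemma psie : psi e = e. Proof. by case: Hp => _ h _ _ _; case: Hp' => _ h' _ _ _; rewrite /psi h' h. Qed.
Lemma psif : psi f = f. Proof. by case: Hp => _ _ _ h _; case: Hp' => _ _ _ h' _; rewrite /psi h' h. Qed.
Lemma phi_psi a : phi (psi a) = phi' a. Proof. by rewrite /psi phiK. Qed.
Lemma psi0 a : gr 0 a -> psi a = a. Proof. by move=> h; rewrite /psi H0 // phiK. Qed.
Lemma psi_gr j a : gr j a -> gr j (psi a).
Proof. by rewrite /in_gr => h; rewrite -{1}psix -psi_br h psiZ. Qed.

Lemma decomp a : exists am1 amh a0 ah a1,
  [/\ gr (-1) am1 /\ gr (- 2^-1) amh, gr 0 a0, gr (2^-1) ah, gr 1 a1
    & a = am1 + amh + a0 + ah + a1].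
Proof. by case: Hm => _ _ h _ _; apply: h. Qed.

Lemma pair_grade u mu p : homog ev od p u -> gr mu u -> u != 0 ->
  exists nu w, [/\ nu \in [:: -1; - 2^-1; 0; 2^-1; 1], mu + nu = 0, gr nu w
                 & (mu != 0 -> br u w != 0)].
Proof.
move=> hu gu nz.
case: Hb => _ _ [B [BL BR [_ Bsym] Binv Bnd]].
have B0r v : B v 0 = 0.
  have h := BR 1 v 0 0; rewrite !mul1r scale1r addr0 in h.
  by apply: (addrI (B v 0)); rewrite addr0 -h.
have B0l v : B 0 v = 0.
  have h := BL 1 0 0 v; rewrite !mul1r scale1r addr0 in h.
  by apply: (addrI (B 0 v)); rewrite addr0 -h.
have BDr v w1 w2 : B v (w1 + w2) = B v w1 + B v w2.
  by have := BR 1 v w1 w2; rewrite scale1r mul1r.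
have BZr a v w : B v (a *: w) = a * B v w.
  by have := BR a v w 0; rewrite addr0 B0r addr0.
have BZl a v w : B (a *: v) w = a * B v w.
  by have := BL a v 0 w; rewrite addr0 B0l addr0.
have orth nu w : gr nu w -> (mu + nu) * B u w = 0.
  move=> gw; have h1 : B u (br x w) = nu * B u w by rewrite gw BZr.
  have h2 : B u (br x w) = - mu * B u w.
    rewrite -Binv; case: lsa => _ _ _ asym _.
    rewrite (asym p false) //; last exact: hx.
    by rewrite /ssign andbF expr0 scale1r gu -scaleNr BZl.
  by rewrite mulrDl -h1 h2 mulNr addrN.
have key nu w : nu \in [:: -1; - 2^-1; 0; 2^-1; 1] -> gr nu w -> B u w != 0 ->
    exists nu w, [/\ nu \in [:: -1; - 2^-1; 0; 2^-1; 1], mu + nu = 0, gr nu w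
                 & (mu != 0 -> br u w != 0)].
  move=> hn gw Bn; exists nu, w; split => //.
    by have /eqP := orth _ _ gw; rewrite mulf_eq0 (negbTE Bn) orbF => /eqP.
  move=> mu0; apply/eqP => b0.
  have := Binv x u w; rewrite b0 B0r gu BZl => /eqP.
  by rewrite mulf_eq0 (negbTE mu0) (negbTE Bn).
have [w0 Bw0] : exists w, B u w != 0.
  apply: NNPP => hn; move/negP: nz; apply; apply/eqP; apply: Bnd => v.
  by case: (eqVneq (B u v) 0) => // hv; exfalso; apply: hn; exists v.
have [am1 [amh [a0 [ah [a1 [[g1 g2] g3 g4 g5 ew]]]]]] := decomp w0.
move: Bw0; rewrite ew !BDr.
case: (eqVneq (B u am1) 0) => [->|n1 _]; last by apply: (key (-1) am1 _ g1 n1); rewrite !inE eqxx ?orbT.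
case: (eqVneq (B u amh) 0) => [->|n1 _]; last by apply: (key (- 2^-1) amh _ g2 n1); rewrite !inE eqxx ?orbT.
case: (eqVneq (B u a0) 0) => [->|n1 _]; last by apply: (key (0) a0 _ g3 n1); rewrite !inE eqxx ?orbT.
case: (eqVneq (B u ah) 0) => [->|n1 _]; last by apply: (key (2^-1) ah _ g4 n1); rewrite !inE eqxx ?orbT.
case: (eqVneq (B u a1) 0) => [->|n1 _]; last by apply: (key (1) a1 _ g5 n1); rewrite !inE eqxx ?orbT.
by rewrite !addr0 eqxx.
Qed.

Lemma nzneg (c : C) n : c * 2 = - n.+1%:R -> c != 0.
Proof.
move=> h; apply/eqP => c0; move: h; rewrite c0 mul0r => /eqP.
by rewrite eq_sym oppr_eq0 pnatr_eq0.
Qed.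

Lemma fb0 b : gr (- 2^-1) b -> br f b = 0.
Proof.
move=> gb; apply/eqP; apply: contraT => nz.
have hy : homog ev od true (br f b).
  case: lsa => _ _ hom _ _; apply: (hom false true) => //; first exact: hf.
  by apply: od_half; right.
have gy := gr_br hf grf gb.
have [nu [w [hn hs _ _]]] := pair_grade hy gy nz.
move: hn hs; rewrite !inE => /orP [/eqP -> | /orP [/eqP -> | /orP [/eqP -> | /orP [/eqP -> | /eqP ->]]]] hs.
- by move/eqP: hs; rewrite (negbTE (@nzneg _ 4 _)) //; field.
- by move/eqP: hs; rewrite (negbTE (@nzneg _ 3 _)) //; field.
- by move/eqP: hs; rewrite (negbTE (@nzneg _ 2 _)) //; field.
- by move/eqP: hs; rewrite (negbTE (@nzneg _ 1 _)) //; field.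
- by move/eqP: hs; rewrite (negbTE (@nzneg _ 0 _)) //; field.
Qed.

Lemma two_nz : (2 : C) != 0. Proof. by rewrite pnatr_eq0. Qed.
Lemma half_nz : (2^-1 : C) != 0. Proof. by rewrite invr_eq0 two_nz. Qed.

Lemma brfe : br f e = - x.
Proof.
case: lsa => _ _ _ asym _; rewrite (asym false false) //; try exact: he; try exact: hf.
by rewrite /ssign /= expr0 scale1r; case: Hm => _ [_ _ ->].
Qed.

Lemma schur : exists l : C, (l = 1 \/ l = -1) /\
  (forall a, gr (2^-1) a \/ gr (- 2^-1) a -> psi a = l *: a).
Proof.
have [U hU] := kerspace_sub (h := br x) (fun a u v => brR a x u v) (2^-1).
have [[a0 [ga0 nza0]] Hirr] := Hh.
have U0 : U != 0%VS.
  apply: contra nza0 => /eqP U0.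
  have : a0 \in U by rewrite hU ga0.
  by rewrite U0 memv0.
have psiU u : u \in U -> psi u \in U.
  by rewrite !hU => /eqP gu; apply/eqP; apply: psi_gr.
have [l [v [vU nzv psiv]]] := exists_eigvec (U:=U) (g0:=psi) psiL U0 psiU.
have [K hK] := kerspace_sub psiL l.
have Uhalf u : u \in (U :&: K)%VS -> gr (2^-1) u by rewrite memv_cap hU => /andP [/eqP].
have half_l : forall a, gr (2^-1) a -> psi a = l *: a.
  have := Hirr (U :&: K)%VS Uhalf.
  case.
  - move=> c a gc; rewrite memv_cap hU hK => /andP [/eqP ga /eqP pa].
    rewrite memv_cap hU hK; apply/andP; split; apply/eqP.
      by have := gr_br (ev_gr0 gc) gc ga; rewrite add0r; apply.
    by rewrite psi_br psi0 // pa brZr.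
  - move=> W0; exfalso; move/negP: nzv; apply.
    have : v \in (U :&: K)%VS by rewrite memv_cap vU hK psiv eqxx.
    by rewrite W0 memv0.
  - by move=> hall a ga; have := hall a ga; rewrite memv_cap hK => /andP [_ /eqP].
have mhalf_l : forall b, gr (- 2^-1) b -> psi b = l *: b.
  move=> b gb.
  have geb : gr (2^-1) (br e b).
    have hh : (1 + - 2^-1 : C) = 2^-1 by field.
    by have := gr_br he gre gb; rewrite hh; apply.
  have fe : br f (br e b) = 2^-1 *: b.
    rewrite (jacx' b hf he) (fb0 gb) br0r addr0 brfe brNl gb scaleNr opprK //.
  have h : 2^-1 *: psi b = 2^-1 *: (l *: b).
    rewrite -psiZ -fe psi_br psif (half_l _ geb).
    have -> : br f (l *: br e b) = l *: br f (br e b) by apply: brZr.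
    rewrite fe.
    by rewrite !scalerA mulrC.
  by move: (congr1 (fun t : V => 2 *: t) h); rewrite !scalerA mulfV ?two_nz // !scale1r mul1r; apply.
exists l; split; last by move=> a [] ?; [apply: half_l | apply: mhalf_l].
have ha0 : homog ev od true a0 by apply: od_half; left.
have [nu [w [_ hs gw hne]]] := pair_grade ha0 ga0 nza0.
have nuE : nu = - 2^-1.
  by apply/eqP; rewrite -addr_eq0 addrC hs.
rewrite nuE in gw.
have nzc := hne half_nz.
have gc : gr 0 (br a0 w) by have := gr_br ha0 ga0 gw; rewrite addrN.
have := psi0 gc; rewrite psi_br half_l // mhalf_l // brZl brZr scalerA.
move/eqP; rewrite -subr_eq0 -{2}(scale1r (br a0 w)) -scalerBl scaler_eq0 (negbTE nzc) orbF.
rewrite subr_eq0 -expr2 sqrf_eq1 => /orP [] /eqP; by [left | right].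
Qed.

Lemma phiD u v : phi (u + v) = phi u + phi v.
Proof. by have := phiL 1 u v; rewrite conjc1 !scale1r. Qed.

Lemma final : (forall a, phi' a = phi a) \/
  (forall (k : int), (-2 <= k <= 2)%R ->
     forall a, gr (k%:~R / 2) a -> phi' a = (-1) ^ k *: phi a).
Proof.
have [l [hl hpsi]] := schur.
have halfE a : gr (2^-1) a \/ gr (- 2^-1) a -> phi' a = conjc l *: phi a.
  by move=> h; rewrite -phi_psi hpsi // phiZ.
have oneE a : gr 1 a \/ gr (-1) a -> phi' a = phi a.
  case: Hm => _ _ _ [h1 h2] _.
  have pe' : phi' e = e by case: Hp'.
  have pe : phi e = e by case: Hp.
  have pf' : phi' f = f by case: Hp'.
  have pf : phi f = f by case: Hp.
  by case=> [/h1|/h2] [c ->]; rewrite phi'Z phiZ ?pe ?pe' ?pf ?pf'.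
have cN1 : conjc (-1 : C) = -1 by rewrite rmorphN1.
case: hl => hl; rewrite hl in halfE; [left|right].
- move=> a; have [am1 [amh [a0 [ah [a1 [[g1 g2] g3 g4 g5 ->]]]]]] := decomp a.
  have h0 := H0 g3; rewrite !phi'D !phiD h0 (oneE am1) ?(halfE amh) ?(halfE ah) ?(oneE a1) ?conjc1 ?scale1r; auto.
- move=> k hk a.
  have : k = -2 \/ k = -1 \/ k = 0 \/ k = 1 \/ k = 2 by lia.
  case => [->|[->|[->|[->|->]]]] ga.
  + have hh : ((-2)%:~R / 2 : C) = -1 by field.
    rewrite hh in ga; rewrite oneE; last by right.
    by rewrite -exprz_inv invrN invr1 (_ : (-1 : C) ^ 2 = 1) ?scale1r //; field.
  + have hh : ((-1)%:~R / 2 : C) = - 2^-1 by field.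
    rewrite hh in ga; rewrite halfE; last by right.
    by rewrite cN1 -exprz_inv invrN invr1 (_ : (-1 : C) ^ 1 = -1) //; field.
  + have hh : ((0)%:~R / 2 : C) = 0 by field.
    by rewrite hh in ga; rewrite H0 // expr0z scale1r.
  + have hh : ((1)%:~R / 2 : C) = 2^-1 by field.
    rewrite hh in ga; rewrite halfE; last by left.
    by rewrite cN1 (_ : (-1 : C) ^ 1 = -1) //; field.
  + have hh : ((2)%:~R / 2 : C) = 1 by field.
    rewrite hh in ga; rewrite oneE; last by left.
    by rewrite (_ : (-1 : C) ^ 2 = 1) ?scale1r //; field.
Qed.

End Pf.

Theorem proposition4p2 (R : realType) (V : vectType R[i])
    (ev od : {vspace V}) (br : V -> V -> V) (e x f : V) (phi phi' : V -> V) :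
  basic_simple ev od br ->
  minimal_sl2 ev od br e x f ->
  half_irreducible br x ->
  almost_compact ev od br e x f phi ->
  almost_compact ev od br e x f phi' ->
  (forall a, in_gr br x 0 a -> phi' a = phi a) ->
  (forall a, phi' a = phi a) \/
  (forall (k : int), (-2 <= k <= 2)%R ->
     forall a, in_gr br x (k%:~R / 2) a -> phi' a = (-1) ^ k *: phi a).
Proof. move=> Hb Hm Hh Hp Hp1 H0. exact: (final Hb Hm Hh Hp Hp1 H0). Qed.
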